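(* Let $\hat q$ be an $n\times n$ and $\hat p$ an $m\times m$ parametric matrix, let $M$ be an $n\times m$ $(\hat q,\hat p)$-Manin matrix over $\mathfrak R$, and let $N$ be an $m\times s$ matrix over $\mathfrak R$ such that every entry $N_{ij}$ commutes with every entry $M_{kl}$. Let $I=(i_1<\dots<i_r)$ be an increasing multi-index with entries in $\{1,\dots,n\}$ and $K=(k_1,\dots,k_r)$ a multi-index with entries in $\{1,\dots,s\}$. If $r\le m$, then $$\mathrm{cdet}_{\hat q}((MN)_{IK})=\sum_J\mathrm{cdet}_{\hat q}(M_{IJ})\,\mathrm{cdet}_{\hat p}(N_{JK}),$$ the sum over all increasing multi-indices $J=(j_1<\dots<j_r)$ with entries in $\{1,\dots,m\}$; if $r>m$, then $\mathrm{cdet}_{\hat q}((MN)_{IK})=0$. In particular, if $m=n=s$, then $\mathrm{cdet}_{\hat q}(MN)=\mathrm{cdet}_{\hat q}(M)\,\mathrm{cdet}_{\hat p}(N)$.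
   Context: $\mathfrak R$ is an associative unital algebra over $\mathbb C$. A parametric $n\times n$ matrix is a matrix $\hat q=(q_{ij})$ of nonzero complex numbers with $q_{ij}q_{ji}=1$, $q_{ii}=1$. An $n\times m$ matrix $M$ over $\mathfrak R$ is a $(\hat q,\hat p)$-Manin matrix if $M_{ik}M_{jk}=q_{ji}M_{jk}M_{ik}$ for $i<j$ and all $k$, and $M_{ik}M_{jl}-q_{ji}p_{kl}M_{jl}M_{ik}+p_{kl}M_{il}M_{jk}-q_{ji}M_{jk}M_{il}=0$ for $i<j$, $k<l$. For increasing $I=(i_1<\dots<i_r)$ and $\sigma\in S_r$, $\varepsilon(\hat q,I,\sigma)=\prod_{s<t,\ \sigma(s)>\sigma(t)}(-q_{i_{\sigma(s)}i_{\sigma(t)}})$. For any matrix $X$, increasing $I$ and any multi-index $J=(j_1,\dots,j_r)$, $\mathrm{cdet}_{\hat q}(X_{IJ})=\sum_{\sigma\in S_r}\varepsilon(\hat q,I,\sigma)X_{i_{\sigma(1)},j_1}\cdots X_{i_{\sigma(r)},j_r}$; $\mathrm{cdet}_{\hat q}(X)$ is the case $I=J=(1,\dots,n)$. *)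

(* Defs.v *)
From HB Require Import structures.
From mathcomp Require Import all_boot all_order all_algebra all_fingroup.
From mathcomp Require Import complex.
From mathcomp Require Import Rstruct.
Set Implicit Arguments.
Unset Strict Implicit.
Unset Printing Implicit Defensive.
Import Order.TTheory GRing.Theory Num.Theory.
Local Open Scope ring_scope.

Definition CC : fieldType := complex Rdefinitions.R.

Definition parametric (n : nat) (q : 'M[CC]_n) : Prop :=
  [/\ forall i j, q i j != 0,
      forall i j, q i j * q j i = 1 &
      forall i, q i i = 1].

(* (q,p)-Manin matrix (indices are 0-based). *)
Definition manin (A : algType CC) (n m : nat) (q : 'M[CC]_n) (p : 'M[CC]_m)
  (M : 'M[A]_(n, m)) : Prop :=
  (forall (i j : 'I_n) (k : 'I_m), (i < j)%N ->
     M i k * M j k = q j i *: (M j k * M i k)) /\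
  (forall (i j : 'I_n) (k l : 'I_m), (i < j)%N -> (k < l)%N ->
     M i k * M j l - (q j i * p k l) *: (M j l * M i k)
     + p k l *: (M i l * M j k) - q j i *: (M j k * M i l) = 0).

Definition increasing (r n : nat) (I : 'I_r -> 'I_n) : bool :=
  [forall a : 'I_r, forall b : 'I_r, (a < b)%N ==> (I a < I b)%N].

Definition eps (n r : nat) (q : 'M[CC]_n) (I : 'I_r -> 'I_n) (sigma : 'S_r) : CC :=
  \prod_(s < r) \prod_(t < r | (s < t)%N && (sigma t < sigma s)%N)
     (- q (I (sigma s)) (I (sigma t))).

Definition cdet (A : algType CC) (n k r : nat) (q : 'M[CC]_n) (X : 'M[A]_(n, k))
  (I : 'I_r -> 'I_n) (J : 'I_r -> 'I_k) : A :=
  \sum_(sigma : 'S_r) eps q I sigma *: \prod_(l < r) X (I (sigma l)) (J l).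

(* Main.v *)
Require Import Defs.
From HB Require Import structures.
From mathcomp Require Import all_boot all_order all_algebra all_fingroup complex Rstruct.
From mathcomp Require Import zify.
Import Order.TTheory GRing.Theory Num.Theory.
Set Implicit Arguments.
Unset Strict Implicit.

Section Comb.
Context (r : nat).

Lemma tperm_val (a b x : 'I_r) :
  val (tperm a b x) = if x == a then val b else if x == b then val a else val x.
Proof.
case: tpermP => [->|->|/eqP/negbTE -> /eqP/negbTE ->]; rewrite ?eqxx //.
by case: eqP => // ->.
Qed.

Lemma tperm_lt (a b x y : 'I_r) : val b = a.+1 ->
  ~~ ((x == a) && (y == b)) -> ~~ ((x == b) && (y == a)) ->
  (tperm a b x < tperm a b y)%N = (x < y)%N.
Proof.
move=> hb; rewrite !tperm_val -!val_eqE /= hb.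
case: (x =P a :> nat) => hx; case: (x =P a.+1 :> nat) => hx';
case: (y =P a :> nat) => hy; case: (y =P a.+1 :> nat) => hy' //=; lia.
Qed.

Lemma chain (m : nat) (f : 'I_r -> 'I_m) :
  (forall a b : 'I_r, val b = a.+1 -> (f a < f b)%N) ->
  forall k (x y : 'I_r), val y = (x + k)%N -> (f x + k <= f y)%N.
Proof.
move=> hf; elim=> [|k IH] x y /= hy.
  by rewrite addn0; have -> : y = x by apply: val_inj; rewrite /= hy addn0.
have hlt : (x + k < r)%N by have := ltn_ord y; lia.
have := IH x (Ordinal hlt) erefl.
have := hf (Ordinal hlt) y ltac:(by rewrite /= hy addnS).
simpl; lia.
Qed.

Lemma adj_incr (m : nat) (f : 'I_r -> 'I_m) :
  (forall a b : 'I_r, val b = a.+1 -> (f a < f b)%N) -> increasing f.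
Proof.
move=> hf; apply/forallP => x; apply/forallP => y; apply/implyP => hxy.
have := chain hf (k:=y - x) (x:=x) (y:=y) ltac:(simpl; lia); lia.
Qed.

Lemma incrP (m : nat) (f : 'I_r -> 'I_m) (x y : 'I_r) :
  increasing f -> (x < y)%N -> (f x < f y)%N.
Proof. by move=> /forallP/(_ x)/forallP/(_ y)/implyP; apply. Qed.

Lemma incr_inj (m : nat) (f : 'I_r -> 'I_m) : increasing f -> injective f.
Proof.
move=> hf x y e; apply: val_inj; case: (ltngtP x y) => // h.
- by have := incrP hf h; rewrite e ltnn.
- by have := incrP hf h; rewrite e ltnn.
Qed.

Lemma incr_id (m : nat) (f : 'I_r -> 'I_m) : (m <= r)%N ->
  (forall a b : 'I_r, val b = a.+1 -> (f a < f b)%N) -> forall x, val (f x) = val x.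
Proof.
move=> hm hf x.
have h0 : (0 < r)%N by have := ltn_ord x; lia.
have hr : (r.-1 < r)%N by lia.
have := chain hf (k:=x) (x:=Ordinal h0) (y:=x) ltac:(simpl; lia).
have := chain hf (k:=r.-1 - x) (x:=x) (y:=Ordinal hr) ltac:(simpl; have := ltn_ord x; lia).
rewrite /=; have := ltn_ord (f (Ordinal hr)); have := ltn_ord x; simpl; lia.
Qed.

Definition nu (w : 'I_r -> nat) (t : 'S_r) := (\sum_(l < r) l * w (t l))%N.

Lemma sum2 (F : 'I_r -> nat) (a b : 'I_r) : a != b ->
  (\sum_(l < r) F l = F a + F b + \sum_(l < r | (l != a) && (l != b)) F l)%N.
Proof.
move=> hab; rewrite (bigD1 a) //= (bigD1 b) /=; last by rewrite eq_sym.
by rewrite addnA.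
Qed.

Lemma nu_swap (w : 'I_r -> nat) (t : 'S_r) (a b : 'I_r) : val b = a.+1 ->
  (nu w (tperm a b * t) + w (t b) = nu w t + w (t a))%N.
Proof.
move=> hb; have hab : a != b by rewrite -val_eqE /= hb; lia.
rewrite /nu !(sum2 _ hab) !permM tpermL tpermR.
rewrite (eq_bigr (fun l : 'I_r => l * w (t l))%N); last first.
  by move=> l /andP[h1 h2]; rewrite permM tpermD // eq_sym.
rewrite hb; set S := (\sum_(_ < _ | _) _)%N; lia.
Qed.

Lemma nu_bound (t : 'S_r) : (nu (fun l => val l) t <= r * (r * r))%N.
Proof.
rewrite /nu; apply: leq_trans (_ : (\sum_(l < r) r * r <= _)%N).
  apply: leq_sum => l _; apply: leq_mul; apply: ltnW; exact: ltn_ord.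
by rewrite sum_nat_const card_ord.
Qed.

End Comb.
Local Open Scope ring_scope.

Lemma eps_adj n r (q : 'M[CC]_n) (I : 'I_r -> 'I_n) (s : 'S_r) (a b : 'I_r) :
  val b = a.+1 -> (s a < s b)%N ->
  eps q I (tperm a b * s)%g = - q (I (s b)) (I (s a)) * eps q I s.
Proof.
move=> hb hs; rewrite /eps !pair_big_dep /=.
have hinj : injective (fun x : 'I_r * 'I_r => (tperm a b x.1, tperm a b x.2)).
  by move=> [x1 x2] [y1 y2] [/perm_inj -> /perm_inj ->].
rewrite [in RHS](@reindex_inj CC (@GRing.mul CC) 1 _ _ _ _ hinj) /=.
rewrite (@bigD1 CC (@GRing.mul CC) 1 _ (a, b)) /=; last by rewrite !permM tpermL tpermR hb ltnSn.
rewrite !permM tpermL tpermR; f_equal; apply: eq_big => [[x y]|[x y] _] /=; last by rewrite !permM.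
rewrite !permM.
case: (boolP ((x == a) && (y == b))) => [/andP[/eqP -> /eqP ->]|h1].
  rewrite eqxx andbF tpermL tpermR; move: hb => /= hb.
  by have -> : (b < a)%N = false by lia.
case: (boolP ((x == b) && (y == a))) => [/andP[/eqP -> /eqP ->]|h2].
  rewrite tpermL tpermR; move: hb hs => /= hb hs.
  have -> : (b < a)%N = false by lia.
  have -> : (s b < s a)%N = false by lia.
  by rewrite !andbF.
rewrite (tperm_lt hb h1 h2).
have -> : (x, y) != (a, b) by rewrite xpair_eqE.
by rewrite andbT.
Qed.

Lemma split_good (V : zmodType) r (f : 'S_r -> V) (a b : 'I_r) : a != b ->
  \sum_(s : 'S_r) f s = \sum_(s : 'S_r | (s a < s b)%N) (f s + f (tperm a b * s)%g).
Proof.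
move=> hab; rewrite (bigID (fun s : 'S_r => (s a < s b)%N)) /= big_split /=.
congr (_ + _); rewrite (reindex_inj (mulgI (tperm a b))) /=.
apply: eq_bigl => s; rewrite !permM tpermL tpermR.
have : s a != s b by rewrite (inj_eq perm_inj).
rewrite -val_eqE; case: ltngtP => //.
Qed.

Lemma prod_swap2 (R : pzRingType) r (F : 'I_r -> R) (a b : 'I_r) : val b = a.+1 ->
  exists P S, forall G : 'I_r -> R, (forall l, l != a -> l != b -> G l = F l) ->
    \prod_(l < r) G l = P * (G a * G b) * S.
Proof.
move=> hb.
exists (\prod_(0 <= i < a) F (insubd a i)), (\prod_(a.+2 <= i < r) F (insubd a i)).
move=> G hG.
have hr : (a.+2 <= r)%N by rewrite -hb ltn_ord.
rewrite (eq_bigr (fun l : 'I_r => G (insubd a (val l)))); last by move=> l _; rewrite valKd.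
rewrite -(big_mkord xpredT (fun i => G (insubd a i))).
rewrite (big_cat_nat _ (n := a)) //=; last by lia.
rewrite (big_cat_nat _ (m := a) (n := a.+2)) //=; last by lia.
rewrite big_nat_recl // big_nat1 valKd -hb valKd !mulrA.
congr (_ * _ * _ * _).
  apply: eq_big_nat => i hi; apply: hG; rewrite -val_eqE /= ?hb insubdK //; lia.
apply: eq_big_nat => i hi; apply: hG; rewrite -val_eqE /= ?hb insubdK //; lia.
Qed.

Lemma prod_comm_split (R : pzRingType) (I : Type) (s : seq I) (x y : I -> R) :
  (forall i j, y i * x j = x j * y i) ->
  \prod_(l <- s) (x l * y l) = (\prod_(l <- s) x l) * (\prod_(l <- s) y l).
Proof.
move=> hc; elim: s => [|i s IH]; first by rewrite !big_nil mulr1.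
rewrite !big_cons IH !mulrA; congr (_ * _); rewrite -!mulrA; congr (_ * _).
by apply: commr_prod => j _; rewrite /GRing.comm hc.
Qed.

Lemma cdet_ext (A : algType CC) n k r (q : 'M[CC]_n) (X : 'M[A]_(n, k))
  (I I' : 'I_r -> 'I_n) (J J' : 'I_r -> 'I_k) :
  I =1 I' -> J =1 J' -> cdet q X I J = cdet q X I' J'.
Proof.
move=> hI hJ; rewrite /cdet; apply: eq_bigr => s _; congr (_ *: _).
  by rewrite /eps; apply: eq_bigr => i _; apply: eq_bigr => j _; rewrite !hI.
by apply: eq_bigr => l _; rewrite hI hJ.
Qed.

Lemma two_neq0 : (1 + 1 : CC) != 0.
Proof.
rewrite /CC; have := @pnatr_eq0 (complex Rdefinitions.R) 2.
by simpl => ->.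
Qed.

Lemma comb4 (A : algType CC) (x1 x2 x3 x4 : A) (c d : CC) :
  x1 - (c * d) *: x2 + d *: x3 - c *: x4 = (x1 - c *: x4) + d *: (x3 - c *: x2).
Proof.
rewrite scalerBr scalerA [d * c]mulrC.
rewrite -!addrA; congr (_ + _).
by rewrite addrCA [RHS]addrCA; congr (_ + _); rewrite addrC.
Qed.

Lemma bracket (A : algType CC) n m (q : 'M[CC]_n) (p : 'M[CC]_m) (M : 'M[A]_(n, m))
  (i j : 'I_n) (k l : 'I_m) :
  parametric p -> manin q p M -> (i < j)%N ->
  M i l * M j k - q j i *: (M j l * M i k) =
  - p l k *: (M i k * M j l - q j i *: (M j k * M i l)).
Proof.
move=> [_ hpp hp1] [h1 h2] hij.
case: (ltngtP k l) => hkl.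
- have := h2 i j k l hij hkl; rewrite comb4 addrC => /eqP; rewrite addr_eq0 => /eqP e.
  by rewrite -[LHS]scale1r -(hpp l k) -scalerA e scalerN scaleNr.
- have := h2 i j l k hij hkl; rewrite comb4 => /eqP; rewrite addr_eq0 => /eqP ->.
  by rewrite scaleNr.
- have -> : k = l by apply: val_inj.
  by rewrite (h1 i j l hij) !subrr scaler0.
Qed.

Lemma comb (A : algType CC) (e c : CC) (P X Y S : A) :
  e *: (P * X * S) + (- c * e) *: (P * Y * S) = e *: (P * (X - c *: Y) * S).
Proof.
rewrite mulrBr mulrBl scalerBr -scalerAr -scalerAl scalerA mulNr scaleNr.
by rewrite [c * e]mulrC.
Qed.

Lemma adj (A : algType CC) n m (q : 'M[CC]_n) (p : 'M[CC]_m) (M : 'M[A]_(n, m))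
  r (I : 'I_r -> 'I_n) (L : 'I_r -> 'I_m) (a b : 'I_r) :
  parametric p -> manin q p M -> increasing I -> val b = a.+1 ->
  cdet q M I (fun l => L (tperm a b l)) = - p (L b) (L a) *: cdet q M I L.
Proof.
move=> hp hM hI hb.
have hab : a != b by apply/eqP => e; move: hb; rewrite e /=; lia.
rewrite /cdet !(split_good _ hab) scaler_sumr; apply: eq_bigr => s hs.
have [P [S HPS]] := prod_swap2 (fun l => M (I (s l)) (L l)) hb.
have hnab : forall l, l != a -> l != b -> tperm a b l = l.
  by move=> l h1 h2; rewrite tpermD // eq_sym.
rewrite (HPS (fun l => M (I (s l)) (L (tperm a b l)))); last first.
  by move=> l h1 h2; rewrite hnab.
rewrite (HPS (fun l => M (I ((tperm a b * s)%g l)) (L (tperm a b l)))); last first.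
  by move=> l h1 h2; rewrite permM !hnab.
rewrite (HPS (fun l => M (I (s l)) (L l))) //.
rewrite (HPS (fun l => M (I ((tperm a b * s)%g l)) (L l))); last first.
  by move=> l h1 h2; rewrite permM !hnab.
rewrite !permM !tpermL !tpermR (eps_adj q I hb hs) !comb.
have hij : (I (s a) < I (s b))%N := incrP hI hs.
rewrite (bracket (L a) (L b) hp hM hij).
by rewrite -scalerAr -scalerAl !scalerA mulrC.
Qed.

Lemma perm_rule (A : algType CC) n m (q : 'M[CC]_n) (p : 'M[CC]_m) (M : 'M[A]_(n, m))
  r (I : 'I_r -> 'I_n) (L : 'I_r -> 'I_m) (t : 'S_r) :
  parametric p -> manin q p M -> increasing I ->
  cdet q M I (fun l => L (t l)) = eps p L t *: cdet q M I L.
Proof.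
move=> hp hM hI.
pose B := (r * (r * r))%N.
suff H : forall k (t : 'S_r), (B - nu (fun l => val l) t < k)%N ->
    cdet q M I (fun l => L (t l)) = eps p L t *: cdet q M I L.
  exact: (H (B - nu (fun l => val l) t).+1).
elim=> [//|k IH] {}t hk.
case: (boolP [exists a : 'I_r, exists b : 'I_r, (val b == a.+1) && (t b < t a)%N]).
- move=> /existsP[a /existsP[b /andP[/eqP hb hlt]]].
  pose t' := (tperm a b * t)%g.
  have ht' : (t' a < t' b)%N by rewrite /t' !permM tpermL tpermR.
  have hnu := nu_swap (fun l => val l) t hb.
  have hbd := nu_bound t'.
  have IH' := IH t' ltac:(move: hnu hbd hk; rewrite /B /t' /=; lia).
  have et : t = (tperm a b * t')%g by rewrite /t' mulgA tperm2 mul1g.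
  rewrite (@cdet_ext _ _ _ _ q M I I _ (fun l => (fun l => L (t' l)) (tperm a b l))) //;
    last by move=> l; rewrite /t' permM tpermK.
  rewrite (adj (fun l => L (t' l)) hp hM hI hb) IH' scalerA.
  by rewrite [in RHS]et (eps_adj p L hb ht').
- move=> hno.
  have hadj : forall a b : 'I_r, val b = a.+1 -> (t a < t b)%N.
    move=> a b hb; move/existsPn: hno => /(_ a) /existsPn /(_ b).
    rewrite hb eqxx /= -leqNgt leq_eqVlt => /orP[|//].
    rewrite val_eqE (inj_eq perm_inj) => /eqP e.
    by move: hb; rewrite e /=; lia.
  have ht1 : forall x, t x = x by move=> x; apply: val_inj; apply: incr_id hadj x.
  rewrite (@cdet_ext _ _ _ _ q M I I _ (L)) //; last by move=> l; rewrite ht1.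
  suff -> : eps p L t = 1 by rewrite scale1r.
  rewrite /eps big1 // => s _; rewrite big_pred0 // => u; rewrite !ht1.
  by case: ltngtP.
Qed.

Lemma zero_noninj (A : algType CC) n m (q : 'M[CC]_n) (p : 'M[CC]_m) (M : 'M[A]_(n, m))
  r (I : 'I_r -> 'I_n) (L : 'I_r -> 'I_m) (x y : 'I_r) :
  parametric p -> manin q p M -> increasing I ->
  x != y -> L x = L y -> cdet q M I L = 0.
Proof.
move=> hp hM hI.
wlog hxy : x y / (x < y)%N.
  move=> H hne he; case: (ltngtP x y) => h.
  - exact: H h hne he.
  - by apply: (H y x h); rewrite // eq_sym.
  - by rewrite (val_inj h) eqxx in hne.
move=> hne he.
have hc : (x.+1 < r)%N by have := ltn_ord y; lia.
pose c := Ordinal hc.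
pose t := tperm c y.
pose L' := fun l => L (t l).
have hcx : c != x by rewrite -val_eqE /=; lia.
have hyx : y != x by rewrite eq_sym.
have hL'x : L' x = L x by rewrite /L' /t tpermD.
have hL'c : L' c = L x by rewrite /L' /t tpermL he.
have h0 : cdet q M I L' = 0.
  have e := @adj _ _ _ q p M _ I L' x c hp hM hI erefl.
  rewrite (@cdet_ext _ _ _ _ q M I I _ (L')) // in e; last first.
    by move=> l; case: tpermP => [->|->|]; rewrite ?hL'x ?hL'c.
  move: e; rewrite hL'c hL'x; case: hp => _ _ -> ; rewrite scaleN1r.
  move/eqP; rewrite -addr_eq0 -[X in X + _]scale1r -[X in _ + X]scale1r -scalerDl.
  by rewrite scaler_eq0 (negbTE two_neq0) => /eqP.
have := @perm_rule _ _ _ q p M _ I L t hp hM hI.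
rewrite -/L' h0 => /esym/eqP; rewrite scaler_eq0 => /orP[|/eqP //].
case: hp => hp0 _ _.
have : eps p L t != 0.
  by apply/prodf_neq0 => s _; apply/prodf_neq0 => u _; rewrite oppr_eq0 hp0.
by move/negbTE => ->.
Qed.

Lemma expand (A : algType CC) n m s (q : 'M[CC]_n) (M : 'M[A]_(n, m)) (N : 'M[A]_(m, s))
  r (I : 'I_r -> 'I_n) (K : 'I_r -> 'I_s) :
  (forall (i : 'I_m) (j : 'I_s) (k : 'I_n) (l : 'I_m), N i j * M k l = M k l * N i j) ->
  cdet q (M *m N) I K =
  \sum_(L : {ffun 'I_r -> 'I_m}) cdet q M I L * \prod_(l < r) N (L l) (K l).
Proof.
move=> hc; rewrite /cdet.
rewrite (eq_bigr (fun sg => eps q I sg *: \sum_(L : {ffun 'I_r -> 'I_m})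
   (\prod_(l < r) M (I (sg l)) (L l)) * \prod_(l < r) N (L l) (K l))); last first.
  move=> sg _; congr (_ *: _).
  rewrite (eq_bigr (fun l => \sum_j M (I (sg l)) j * N j (K l))); last by move=> l _; rewrite mxE.
  rewrite bigA_distr_bigA /=; apply: eq_bigr => L _.
  exact: (@prod_comm_split _ _ _ (fun l => M (I (sg l)) (L l)) (fun l => N (L l) (K l))
            (fun i j => hc _ _ _ _)).
under eq_bigr do rewrite scaler_sumr.
rewrite exchange_big /=; apply: eq_bigr => L _; rewrite mulr_suml.
by apply: eq_bigr => sg _; rewrite scalerAl.
Qed.

Lemma exists_sort r m (L : 'I_r -> 'I_m) : injective L ->
  exists J : {ffun 'I_r -> 'I_m}, exists t : 'S_r, increasing J /\ forall a, J (t a) = L a.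
Proof.
move=> hL.
pose w := fun l : 'I_m => val l.
case: (@arg_maxnP _ (1%g : 'S_r) xpredT (nu (fun l => w (L l))) erefl) => t0 _ hmax.
exists [ffun l => L (t0 l)], t0^-1%g; split; last by move=> a; rewrite ffunE permKV.
apply: adj_incr => a b hb; rewrite !ffunE.
case: (ltngtP (L (t0 a)) (L (t0 b))) => // h.
- have := hmax (tperm a b * t0)%g isT; have := nu_swap (fun l => w (L l)) t0 hb.
  rewrite /w /=; lia.
- have /hL /perm_inj e := val_inj h.
  by move: hb; rewrite e /=; lia.
Qed.

Lemma uniq_sort r m (J J' : 'I_r -> 'I_m) (t t' : 'S_r) :
  increasing J -> increasing J' -> (forall a, J (t a) = J' (t' a)) ->
  (forall x, J x = J' x) /\ t = t'.
Proof.
move=> hJ hJ' e.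
pose rho := (t^-1 * t')%g.
have hr : forall x, J x = J' (rho x) by move=> x; rewrite /rho permM -e permKV.
have hid : forall x, rho x = x.
  move=> x; apply: val_inj; apply: (@incr_id r r rho (leqnn r)) => a b hb.
  have hab : (a < b)%N by rewrite hb.
  have := incrP hJ hab; rewrite !hr.
  case: (ltngtP (rho a) (rho b)) => // h.
  - by have := incrP hJ' h; lia.
  - by rewrite (val_inj h) ltnn.
have hJJ : forall x, J x = J' x by move=> x; rewrite hr hid.
split=> //; apply/permP => a; apply: (incr_inj hJ).
by rewrite e hJJ.
Qed.

Lemma sum_reindex (V : zmodType) r m (F : {ffun 'I_r -> 'I_m} -> V) :
  (forall L : {ffun 'I_r -> 'I_m}, ~~ injectiveb L -> F L = 0) ->
  \sum_(L : {ffun 'I_r -> 'I_m}) F L =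
  \sum_(J : {ffun 'I_r -> 'I_m} | increasing J) \sum_(t : 'S_r) F [ffun l => J (t l)].
Proof.
move=> hF.
transitivity (\sum_(L : {ffun 'I_r -> 'I_m}) \sum_(J : {ffun 'I_r -> 'I_m} | increasing J)
   \sum_(t : 'S_r) (if L == [ffun l => J (t l)] then F L else 0)).
  apply: eq_bigr => L _.
  case: (boolP (injectiveb L)) => hL; last first.
    by rewrite hF // big1 // => J _; rewrite big1 // => t _; rewrite if_same.
  have [J0 [t0 [hJ0 ht0]]] := exists_sort (injectiveP _ hL).
  rewrite (bigD1 J0) //= (bigD1 t0) //= ifT; last first.
    by apply/eqP/ffunP => a; rewrite ffunE ht0.
  rewrite big1 ?addr0; last first.
    move=> t ht; case: eqP => // eL.
    have [_ ett] := uniq_sort hJ0 hJ0 (t := t0) (t' := t)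
      (fun a => etrans (ht0 a) (etrans (congr1 (fun f : {ffun 'I_r -> 'I_m} => f a) eL) (ffunE _ _))).
    by rewrite ett eqxx in ht.
  rewrite big1 ?addr0 //.
  move=> J /andP[hJ hne]; rewrite big1 // => t _; case: eqP => // eL.
  have [hjj _] := uniq_sort hJ0 hJ (t := t0) (t' := t)
      (fun a => etrans (ht0 a) (etrans (congr1 (fun f : {ffun 'I_r -> 'I_m} => f a) eL) (ffunE _ _))).
  have eJ : J = J0 by apply/ffunP => x; rewrite hjj.
  by rewrite eJ eqxx in hne.
rewrite exchange_big /=; apply: eq_bigr => J hJ.
rewrite exchange_big /=; apply: eq_bigr => t _.
by rewrite -big_mkcond /= big_pred1_eq.
Qed.

Unset Implicit Arguments.
Set Strict Implicit.

Theorem mainTheorem5 (A : algType CC) (n m s : nat)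
  (q : 'M[CC]_n) (p : 'M[CC]_m) (M : 'M[A]_(n, m)) (N : 'M[A]_(m, s)) :
  parametric q -> parametric p -> manin q p M ->
  (forall (i : 'I_m) (j : 'I_s) (k : 'I_n) (l : 'I_m), N i j * M k l = M k l * N i j) ->
  (forall (r : nat) (I : 'I_r -> 'I_n) (K : 'I_r -> 'I_s), increasing I ->
     ((r <= m)%N ->
        cdet q (M *m N) I K =
        \sum_(J : {ffun 'I_r -> 'I_m} | increasing J) cdet q M I J * cdet p N J K) /\
     ((m < r)%N -> cdet q (M *m N) I K = 0)) /\
  (forall (em : n = m) (es : n = s),
     cdet q (M *m N) id (cast_ord es) =
     cdet q M id (cast_ord em) * cdet p N (cast_ord em) (cast_ord es)).
Proof.
move=> hq hp hM hc.
have part1 : forall (r : nat) (I : 'I_r -> 'I_n) (K : 'I_r -> 'I_s), increasing I ->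
     ((r <= m)%N ->
        cdet q (M *m N) I K =
        \sum_(J : {ffun 'I_r -> 'I_m} | increasing J) cdet q M I J * cdet p N J K) /\
     ((m < r)%N -> cdet q (M *m N) I K = 0).
  move=> r I K hI; rewrite (expand _ _ _ hc); split.
  - move=> _; rewrite sum_reindex; last first.
      move=> L /injectivePn [x [y hxy he]].
      by rewrite (zero_noninj hp hM hI hxy he) mul0r.
    apply: eq_bigr => J hJ.
    rewrite [cdet p N J K]/cdet mulr_sumr; apply: eq_bigr => t _.
    rewrite (@cdet_ext _ _ _ _ q M I I _ (fun l => J (t l))) //; last by move=> l; rewrite ffunE.
    rewrite (@perm_rule _ _ _ q p M _ I J t hp hM hI) -scalerAl -scalerAr.
    by congr (_ *: (_ * _)); apply: eq_bigr => l _; rewrite ffunE.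
  - move=> hmr; rewrite big1 // => L _.
    have : ~~ injectiveb L.
      apply/negP => /injectiveP hinj; have := @leq_card _ _ L hinj; rewrite !card_ord; lia.
    move/injectivePn => [x [y hxy he]].
    by rewrite (zero_noninj hp hM hI hxy he) mul0r.
split=> // em es.
have hI : increasing (@id 'I_n) by apply/forallP => a; apply/forallP => b; apply/implyP.
rewrite ((part1 n id (cast_ord es) hI).1); last by rewrite em.
rewrite (big_pred1 [ffun l => cast_ord em l]); last first.
  move=> J; rewrite /=; apply/idP/eqP.
  - move=> hJ; apply/ffunP => x; rewrite ffunE; apply: val_inj => /=.
    apply: (@incr_id n m J); first by rewrite em.
    by move=> a b hb; apply: incrP hJ _; rewrite hb.
  - by move=> ->; apply/forallP => a; apply/forallP => b; apply/implyP; rewrite !ffunE.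
rewrite (@cdet_ext _ _ _ _ q M id id _ (cast_ord em)) //; last by move=> l; rewrite ffunE.
by rewrite (@cdet_ext _ _ _ _ p N _ (cast_ord em) _ (cast_ord es)) // => l; rewrite ffunE.
Qed.
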